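(* Let $P\in\Delta$ be such that, under $P$, $Y$ and $Z$ are conditionally independent given $X$, and $Y$ and $Z$ are (unconditionally) independent. Then $\widetilde{SI}(X:Y;Z)=0$.
   Context: $X,Y,Z$ are random variables with finite state spaces $\mathcal X,\mathcal Y,\mathcal Z$. $\Delta$ denotes the set of all probability distributions on $\mathcal X\times\mathcal Y\times\mathcal Z$; $P\in\Delta$ is the joint distribution, and a subscript $Q$ means computed w.r.t. $Q\in\Delta$. $\Delta_P=\{Q\in\Delta: Q(X=x,Y=y)=P(X=x,Y=y)\text{ and }Q(X=x,Z=z)=P(X=x,Z=z)\ \forall x,y,z\}$. $CoI_Q(X;Y;Z)=MI_Q(X:Y)-MI_Q(X:Y|Z)$ and $\widetilde{SI}(X:Y;Z)=\max_{Q\in\Delta_P}CoI_Q(X;Y;Z)$. *)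

(* Defs.v *)
From mathcomp Require Import all_boot.
From Stdlib Require Import Reals.
Set Implicit Arguments. Unset Strict Implicit. Unset Printing Implicit Defensive.

Local Open Scope R_scope.

Notation "\rsum_ ( i : T ) F" := (\big[Rplus/0%R]_(i : T) F)
  (at level 41, F at level 41, i, T at level 50).

Section Info.
Variables (X Y Z : finType).

Definition jdist := X -> Y -> Z -> R.

Definition is_dist (Q : jdist) : Prop :=
  (forall x y z, 0 <= Q x y z) /\ \rsum_(x : X) \rsum_(y : Y) \rsum_(z : Z) Q x y z = 1.

Definition pXY (Q : jdist) x y := \rsum_(z : Z) Q x y z.
Definition pXZ (Q : jdist) x z := \rsum_(y : Y) Q x y z.
Definition pYZ (Q : jdist) y z := \rsum_(x : X) Q x y z.
Definition pX (Q : jdist) x := \rsum_(y : Y) \rsum_(z : Z) Q x y z.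
Definition pY (Q : jdist) y := \rsum_(x : X) \rsum_(z : Z) Q x y z.
Definition pZ (Q : jdist) z := \rsum_(x : X) \rsum_(y : Y) Q x y z.

Definition plog (p r : R) : R := if Req_EM_T p 0 then 0 else p * ln r.

Definition MI_XY (Q : jdist) : R :=
  \rsum_(x : X) \rsum_(y : Y) plog (pXY Q x y) (pXY Q x y / (pX Q x * pY Q y)).

Definition MI_XY_Z (Q : jdist) : R :=
  \rsum_(x : X) \rsum_(y : Y) \rsum_(z : Z)
    plog (Q x y z) (Q x y z * pZ Q z / (pXZ Q x z * pYZ Q y z)).

Definition CoI (Q : jdist) : R := MI_XY Q - MI_XY_Z Q.

Definition in_DeltaP (P Q : jdist) : Prop :=
  is_dist Q /\ (forall x y, pXY Q x y = pXY P x y) /\ (forall x z, pXZ Q x z = pXZ P x z).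

(* v = SI~(X:Y;Z) = max_{Q in Delta_P} CoI_Q(X;Y;Z): v is attained and is an upper bound *)
Definition is_SItilde (P : jdist) (v : R) : Prop :=
  (exists Q, in_DeltaP P Q /\ CoI Q = v) /\ (forall Q, in_DeltaP P Q -> CoI Q <= v).

Definition cond_indep_YZ_given_X (P : jdist) : Prop :=
  forall x y z, P x y z * pX P x = pXY P x y * pXZ P x z.

Definition indep_YZ (P : jdist) : Prop :=
  forall y z, pYZ P y z = pY P y * pZ P z.

End Info.

(* Main.v *)
Require Import Defs.
From Stdlib Require Import Reals.
From mathcomp Require Import all_boot.
From HB Require Import structures.
From Stdlib Require Import Lra Classical.
Set Implicit Arguments.
Local Open Scope R_scope.

HB.instance Definition _ := Monoid.isComLaw.Build R 0 Rplus (fun a b c => esym (Rplus_assoc a b c)) Rplus_comm Rplus_0_l.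

Section Sums.
Variable I : finType.

Lemma sumR_mull (F : I -> R) c :
  \big[Rplus/0]_(i : I) (F i * c) = (\big[Rplus/0]_(i : I) F i) * c.
Proof.
apply: (big_rec2 (fun a b => a = b * c)); first by ring.
by move=> i a b _ ->; ring.
Qed.

Lemma sumR_opp (F : I -> R) :
  \big[Rplus/0]_(i : I) (- F i) = - \big[Rplus/0]_(i : I) F i.
Proof.
apply: (big_rec2 (fun a b => a = - b)); first by ring.
by move=> i a b _ ->; ring.
Qed.

Lemma sumR_sub (F G : I -> R) :
  \big[Rplus/0]_(i : I) (F i - G i) =
  \big[Rplus/0]_(i : I) F i - \big[Rplus/0]_(i : I) G i.
Proof.
rewrite /Rminus big_split /= sumR_opp //.
Qed.

Lemma sumR_ge0 (P : pred I) (F : I -> R) :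
  (forall i, P i -> 0 <= F i) -> 0 <= \big[Rplus/0]_(i | P i) F i.
Proof.
move=> H; apply: (big_ind (fun a => 0 <= a)) => //; try lra.
by move=> a b; lra.
Qed.

Lemma sumR_le (F G : I -> R) :
  (forall i, F i <= G i) -> \big[Rplus/0]_(i : I) F i <= \big[Rplus/0]_(i : I) G i.
Proof.
move=> H; apply: (big_ind2 (fun a b => a <= b)) => //; try lra.
by move=> a b c d; lra.
Qed.

Lemma le_sumR_term (F : I -> R) j :
  (forall i, 0 <= F i) -> F j <= \big[Rplus/0]_(i : I) F i.
Proof.
move=> H; rewrite (bigD1 j) //=.
have := @sumR_ge0 (fun i => i != j) F (fun i _ => H i); lra.
Qed.

End Sums.

Lemma plogE p r : plog p r = p * ln r.
Proof. rewrite /plog; destruct (Req_EM_T p 0) as [h|h]; simpl; [subst p; ring | lra]. Qed.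

Lemma ln_ineq u : 0 < u -> ln u <= u - 1.
Proof. move=> hu; have := exp_ineq1_le (ln u); rewrite exp_ln //; lra. Qed.

Lemma ln4 a b c d : 0 < a -> 0 < b -> 0 < c -> 0 < d ->
  ln (a * b / (c * d)) = ln a + ln b - ln c - ln d.
Proof.
move=> ha hb hc hd; rewrite /Rdiv ln_mult; try apply: Rmult_lt_0_compat => //.
  rewrite ln_mult // ln_Rinv; last by apply: Rmult_lt_0_compat.
  rewrite ln_mult //; ring.
by apply: Rinv_0_lt_compat; apply: Rmult_lt_0_compat.
Qed.

Lemma ln3 a b c : 0 < a -> 0 < b -> 0 < c ->
  ln (a / (b * c)) = ln a - ln b - ln c.
Proof.
move=> ha hb hc; rewrite /Rdiv ln_mult //.
  rewrite ln_Rinv; last by apply: Rmult_lt_0_compat.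
  rewrite ln_mult //; ring.
by apply: Rinv_0_lt_compat; apply: Rmult_lt_0_compat.
Qed.

Section Main.
Variables (X Y Z : finType).
Implicit Types (P Q : jdist X Y Z).

Definition term Q x y z :=
  Q x y z * (ln (Q x y z * pZ Q z / (pXZ Q x z * pYZ Q y z))
             - ln (pXY Q x y / (pX Q x * pY Q y))).

Lemma diffE Q : MI_XY_Z Q - MI_XY Q =
  \big[Rplus/0]_(x : X) \big[Rplus/0]_(y : Y) \big[Rplus/0]_(z : Z) term Q x y z.
Proof.
rewrite /MI_XY_Z /MI_XY -sumR_sub; apply: eq_bigr => x _.
rewrite -sumR_sub; apply: eq_bigr => y _.
rewrite plogE /pXY -sumR_mull -sumR_sub; apply: eq_bigr => z _.
rewrite plogE /term /pXY; ring.
Qed.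

Lemma pX_eq P Q : in_DeltaP P Q -> forall x, pX Q x = pX P x.
Proof.
move=> [_ [hXY _]] x; change (\big[Rplus/0]_(y : Y) pXY Q x y = \big[Rplus/0]_(y : Y) pXY P x y).
by apply: eq_bigr => y _; rewrite hXY.
Qed.

Lemma pY_eq P Q : in_DeltaP P Q -> forall y, pY Q y = pY P y.
Proof.
move=> [_ [hXY _]] y; change (\big[Rplus/0]_(x : X) pXY Q x y = \big[Rplus/0]_(x : X) pXY P x y).
by apply: eq_bigr => x _; rewrite hXY.
Qed.

Lemma pZ_eq P Q : in_DeltaP P Q -> forall z, pZ Q z = pZ P z.
Proof.
move=> [_ [_ hXZ]] z; change (\big[Rplus/0]_(x : X) pXZ Q x z = \big[Rplus/0]_(x : X) pXZ P x z).
by apply: eq_bigr => x _; rewrite hXZ.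
Qed.

Lemma term_eq P Q x y z :
  is_dist P -> cond_indep_YZ_given_X P -> indep_YZ P -> in_DeltaP P Q ->
  0 < Q x y z ->
  0 < P x y z /\ 0 < pYZ Q y z /\ 0 < pYZ P y z /\
  term Q x y z = Q x y z * (ln (Q x y z) - ln (pYZ Q y z) - ln (P x y z) + ln (pYZ P y z)).
Proof.
move=> [hP0 _] hci hind hD hQ.
have hD' := hD; move: hD' => [[hQ0 _] [hXY hXZ]].
have qXY : 0 < pXY P x y.
  rewrite -hXY; apply: Rlt_le_trans hQ _; rewrite /pXY; apply: (@le_sumR_term _ (fun z => Q x y z) z) => ?; exact: hQ0.
have qXZ : 0 < pXZ P x z.
  rewrite -hXZ; apply: Rlt_le_trans hQ _; rewrite /pXZ; apply: (@le_sumR_term _ (fun y => Q x y z) y) => ?; exact: hQ0.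
have qYZ : 0 < pYZ Q y z.
  apply: Rlt_le_trans hQ _; rewrite /pYZ; apply: (@le_sumR_term _ (fun x => Q x y z) x) => ?; exact: hQ0.
have nXY : forall x y, 0 <= pXY P x y.
  by move=> ? ?; apply: sumR_ge0 => ? _; exact: hP0.
have nXZ : forall x z, 0 <= pXZ P x z.
  by move=> ? ?; apply: sumR_ge0 => ? _; exact: hP0.
have qX : 0 < pX P x.
  apply: Rlt_le_trans qXY _; change (pXY P x y <= \big[Rplus/0]_(y0 : Y) pXY P x y0); apply: (@le_sumR_term _ (fun y => pXY P x y) y) => ?; exact: nXY.
have qY : 0 < pY P y.
  apply: Rlt_le_trans qXY _; change (pXY P x y <= \big[Rplus/0]_(x0 : X) pXY P x0 y); apply: (@le_sumR_term _ (fun x => pXY P x y) x) => ?; exact: nXY.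
have qZ : 0 < pZ P z.
  apply: Rlt_le_trans qXZ _; change (pXZ P x z <= \big[Rplus/0]_(x0 : X) pXZ P x0 z); apply: (@le_sumR_term _ (fun x => pXZ P x z) x) => ?; exact: nXZ.
have hPe : P x y z = pXY P x y * pXZ P x z / pX P x.
  by rewrite -hci; field; lra.
have qP : 0 < P x y z.
  rewrite hPe; apply: Rdiv_lt_0_compat => //; exact: Rmult_lt_0_compat.
have qPYZ : 0 < pYZ P y z by rewrite hind; exact: Rmult_lt_0_compat.
split => //; split => //; split => //.
rewrite /term (pZ_eq hD) (pX_eq hD) (pY_eq hD) hXY hXZ ln4 // ln3 //.
rewrite hind ln_mult // hPe /Rdiv ln_mult; last by apply: Rinv_0_lt_compat.
  rewrite ln_Rinv // ln_mult //; ring.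
exact: Rmult_lt_0_compat.
Qed.


Lemma term_ge P Q x y z :
  is_dist P -> cond_indep_YZ_given_X P -> indep_YZ P -> in_DeltaP P Q ->
  0 < pYZ P y z ->
  Q x y z - P x y z * pYZ Q y z / pYZ P y z <= term Q x y z.
Proof.
move=> hP hci hind hD hPYZ.
have hD' := hD; move: hD' => [[hQ0 _] _].
have hP' := hP; move: hP' => [hP0 _].
have nQYZ : 0 <= pYZ Q y z by apply: sumR_ge0 => ? _; exact: hQ0.
have h1 : 0 <= P x y z * pYZ Q y z / pYZ P y z.
  apply: Rmult_le_pos; first exact: Rmult_le_pos.
  by apply: Rlt_le; apply: Rinv_0_lt_compat.
have [h0|hq] : Q x y z = 0 \/ 0 < Q x y z by have := hQ0 x y z; lra.
  rewrite /term h0; lra.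
have [qP [qQYZ [_ ->]]] := term_eq x y z hP hci hind hD hq.
set u := P x y z * pYZ Q y z / (Q x y z * pYZ P y z).
have qu : 0 < u.
  apply: Rdiv_lt_0_compat; exact: Rmult_lt_0_compat.
have Hl := ln_ineq qu.
have Hu : ln u = ln (P x y z) + ln (pYZ Q y z) - ln (Q x y z) - ln (pYZ P y z).
  by rewrite /u ln4.
have Hqu : Q x y z * u = P x y z * pYZ Q y z / pYZ P y z.
  by rewrite /u; field; lra.
rewrite -Hqu.
have : 0 <= Q x y z * (ln (Q x y z) - ln (pYZ Q y z) - ln (P x y z) + ln (pYZ P y z) - 1 + u).
  apply: Rmult_le_pos; lra.
lra.
Qed.

Lemma CoI_le P Q :
  is_dist P -> cond_indep_YZ_given_X P -> indep_YZ P -> in_DeltaP P Q ->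
  CoI Q <= 0.
Proof.
move=> hP hci hind hD.
have hD' := hD; move: hD' => [[hQ0 _] _].
have hP' := hP; move: hP' => [hP0 _].
suff : 0 <= MI_XY_Z Q - MI_XY Q by rewrite /CoI; lra.
rewrite diffE exchange_big /=.
apply: sumR_ge0 => y _.
rewrite exchange_big /=.
apply: sumR_ge0 => z _.
have nQYZ : 0 <= pYZ Q y z by apply: sumR_ge0 => ? _; exact: hQ0.
case: (classic (exists x, Q x y z <> 0)) => [[x0 hx0]|hno]; last first.
  rewrite big1; first by apply: Rle_refl.
  move=> x _; have hq : Q x y z = 0 by apply: NNPP => h; apply: hno; exists x.
  by rewrite /term hq; ring.
have hq0 : 0 < Q x0 y z by have := hQ0 x0 y z; lra.
have [_ [_ [qPYZ _]]] := term_eq x0 y z hP hci hind hD hq0.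
have HS := @sumR_le X _ _ (fun x => term_ge x hP hci hind hD qPYZ).
apply: Rle_trans HS.
rewrite sumR_sub /Rdiv sumR_mull sumR_mull.
change (0 <= pYZ Q y z - pYZ P y z * pYZ Q y z * / pYZ P y z).
have : pYZ P y z * pYZ Q y z * / pYZ P y z = pYZ Q y z by field; lra.
lra.
Qed.

Lemma CoI_P P :
  is_dist P -> cond_indep_YZ_given_X P -> indep_YZ P -> CoI P = 0.
Proof.
move=> hP hci hind.
have hD : in_DeltaP P P by split => //; split.
have hP' := hP; move: hP' => [hP0 _].
suff : MI_XY_Z P - MI_XY P = 0 by rewrite /CoI; lra.
rewrite diffE; apply: big1 => x _; apply: big1 => y _; apply: big1 => z _.
have [h0|hq] : P x y z = 0 \/ 0 < P x y z by have := hP0 x y z; lra.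
  by rewrite /term h0; ring.
have [_ [_ [_ ->]]] := term_eq x y z hP hci hind hD hq.
ring.
Qed.

End Main.

Theorem mainTheorem7 (X Y Z : finType) (P : jdist X Y Z) :
  is_dist P -> cond_indep_YZ_given_X P -> indep_YZ P -> is_SItilde P 0.
Proof.
move=> hP hci hind; split.
  exists P; split; last exact: CoI_P.
  by split => //; split.
move=> Q hD; exact: CoI_le hD.
Qed.
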